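(* Let $n>s\ge1$ be integers and $g(x)=\sum_{i=0}^sa_ix^i\in\mathbb{R}[x]$ of degree $s$ with nonzero discriminant, and let $f(t,x)=x^n+t\,g(x)$. Suppose $g$ has no real roots, $n-s$ is even, and $a_s>0$. Then for every real $\beta>\max\{\alpha\in\mathbb{R}\mid \Delta_{f,x}(\alpha)=0\}$, the polynomial $f(\beta,x)$ has no real roots (it is totally complex).
   Context: $\Delta_{f,x}(t)$ denotes the discriminant of $f(t,x)$ with respect to $x$, a polynomial in $t$ (it vanishes at $t=0$). A real polynomial is totally complex if it has no real roots. *)

(* Defs.v *)
From HB Require Import structures.
From mathcomp Require Import all_boot all_order all_algebra.
Set Implicit Arguments. Unset Strict Implicit. Unset Printing Implicit Defensive.
Import Order.TTheory GRing.Theory Num.Theory.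
Local Open Scope ring_scope.

Definition discriminant (R : comUnitRingType) (p : {poly R}) : R :=
  let d := (size p).-1 in
  (-1) ^+ ((d * d.-1) %/ 2) * (lead_coef p)^-1 * resultant p p^`().

(* f(t,x) = x^n + t g(x), as a polynomial in x whose coefficients are
   polynomials in t. *)
Definition fpoly (R : idomainType) (n : nat) (g : {poly R}) : {poly {poly R}} :=
  'X^n + map_poly polyC g * ('X : {poly R})%:P.

Definition spec_t (R : idomainType) (b : R) (F : {poly {poly R}}) : {poly R} :=
  map_poly (fun c : {poly R} => c.[b]) F.

Definition totally_complex (R : numDomainType) (p : {poly R}) : Prop :=
  forall x : R, ~~ root p x.

(* Main.v *)
Require Import Defs.
From HB Require Import structures.
From mathcomp Require Import all_boot all_order all_algebra.
From mathcomp Require Import polyrcf.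
Import Order.TTheory GRing.Theory Num.Theory.
Local Open Scope ring_scope.

Theorem mainTheorem8 (R : rcfType) (n s : nat) (g : {poly R}) :
  (1 <= s)%N -> (s < n)%N ->
  size g = s.+1 ->
  discriminant g != 0 ->
  totally_complex g ->
  ~~ odd (n - s) ->
  0 < lead_coef g ->
  forall beta : R,
    (forall alpha : R, root (discriminant (fpoly n g)) alpha -> alpha < beta) ->
    totally_complex (spec_t beta (fpoly n g)).
Proof.
move=> s1 sn sg _ tcg npar lcg beta Hb.
set F := fpoly n g.
have g0 : g != 0 by rewrite -size_poly_gt0 sg.
have szG : size (map_poly polyC g * ('X : {poly R})%:P) = s.+1.
  by rewrite size_mul ?polyC_eq0 ?polyX_eq0 ?map_poly_eq0 // size_polyC polyX_eq0 size_map_polyC sg addn1.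
have szF : size F = n.+1.
  by rewrite /F /fpoly size_polyDl size_polyXn // szG.
have lcF : lead_coef F = 1.
  by rewrite /F /fpoly lead_coefDl ?size_polyXn ?szG // lead_coefXn.
have [m nm] : exists m, n = m.+1 by exists n.-1; rewrite prednK // (leq_ltn_trans _ sn).
have cF' : F^`()`_m = 1 *+ n.
  rewrite coef_deriv -nm -[in RHS]lcF lead_coefE szF //.
have lcF' : lead_coef F^`() = 1 *+ n.
  rewrite lead_coefE; suff -> : size F^`() = n by rewrite nm /= -nm cF'.
  apply/eqP; rewrite eqn_leq; apply/andP; split.
    by rewrite -ltnS -szF lt_size_deriv // -size_poly_gt0 szF.
  rewrite nm ltnNge; apply/negP => /leq_sizeP /(_ m (leqnn _)).
  by rewrite cF' -polyC1 -polyCMn => /eqP; rewrite polyC_eq0 pnatr_eq0 nm.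
have F0 : map_poly (horner_eval 0) F = 'X^n.
  rewrite /F /fpoly rmorphD /= rmorphXn /= map_polyX rmorphM /= map_polyC /=.
  by rewrite /horner_eval hornerX mulr0 addr0.
have r0 : root (discriminant F) 0.
  rewrite /root /discriminant lcF invr1 mulr1 hornerM.
  have -> : (resultant F F^`()).[0] = horner_eval 0 (resultant F F^`()) by [].
  rewrite map_resultant; last first.
  - by rewrite lcF' /= /horner_eval hornerMn hornerC pnatr_eq0 nm.
  - by rewrite lcF /= /horner_eval hornerC oner_eq0.
  rewrite -deriv_map F0 derivXn.
  rewrite mulf_eq0; apply/orP; right.
  rewrite resultant_eq0.
  apply: (@root_size_gt1 _ 0).
    by rewrite gcdp_eq0 negb_and monic_neq0 ?monicXn.
  have m0 : (0 < m)%N by rewrite -ltnS -nm (leq_ltn_trans s1 sn).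
  rewrite root_gcd /root hornerMn !hornerXn !expr0n nm /= eqxx (gtn_eqF m0) mul0rn eqxx //.
have b0 : 0 < beta by exact: Hb _ r0.
have gpos : forall y, 0 < g.[y].
  move=> y; have := @sgp_pinftyP R y g (fun z _ => tcg z) y.
  rewrite in_itv /= lexx => /(_ isT); rewrite /sgp_pinfty (gtr0_sg lcg) => /eqP.
  by rewrite sgr_cp0.
have oddg : odd s.+1.
  case: (boolP (odd s.+1)) => // h; have /odd_poly_root [x rx] : ~~ odd (size g) by rewrite sg.
  by move: (tcg x); rewrite rx.
have evn : ~~ odd n.
  have es : ~~ odd s by [].
  by move: npar; rewrite oddB ?(ltnW sn) // (negbTE es) addbF.
have -> : spec_t beta F = 'X^n + g * beta%:P.
  rewrite /spec_t (_ : (fun c : {poly R} => c.[beta]) = horner_eval beta) //.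
  rewrite /F /fpoly rmorphD /= rmorphXn /= map_polyX rmorphM /= map_polyC /=.
  rewrite -map_poly_comp (@eq_map_poly _ _ _ id); last first.
    by move=> c /=; rewrite /horner_eval hornerC.
  by rewrite map_poly_id // /horner_eval hornerX.
move=> x; rewrite /root !hornerE; apply: lt0r_neq0.
by rewrite ltr_wpDl ?exprn_even_ge0 // mulr_gt0.
Qed.
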